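(* Let $\{\Pi_{\bm{x}}\}_{\bm{x}\in\{0,1\}^n}$ be a POVM on $(\mathbb{C}^2)^{\otimes n}$ with measurement channel $\mathcal{M}(\rho)=\sum_{\bm{x}}\operatorname{tr}[\Pi_{\bm{x}}\rho]|\bm{x}\rangle\langle\bm{x}|$, let $\mathcal{M}^{\mathrm{Pauli}}(\rho)=\frac{1}{4^n}\sum_{P\in\{I,X,Y,Z\}^{\otimes n}}P\mathcal{M}(P\rho P)P$, and let $\{\Pi^{\mathrm{Pauli}}_{\bm{x}}\}_{\bm{x}}$ be the POVM with $\mathcal{M}^{\mathrm{Pauli}}(\rho)=\sum_{\bm{x}}\operatorname{tr}[\Pi^{\mathrm{Pauli}}_{\bm{x}}\rho]|\bm{x}\rangle\langle\bm{x}|$ for all $\rho$. Then for all $\bm{x},\bm{y}\in\{0,1\}^n$, $$\operatorname{diag}(\Pi^{\mathrm{Pauli}}_{\bm{y}})=\mathsf{T}_{\bm{y}}\mathsf{T}_{\bm{x}}^{-1}\operatorname{diag}(\Pi^{\mathrm{Pauli}}_{\bm{x}}).$$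
   Context: $\operatorname{diag}(A)\in\mathbb{C}^{2^n}$ is the vector $(\langle\bm{w}|A|\bm{w}\rangle)_{\bm{w}\in\{0,1\}^n}$ in the computational basis. For $\bm{x}\in\{0,1\}^n$, $\mathsf{T}_{\bm{x}}$ is the $2^n\times2^n$ matrix with rows and columns indexed by $\bm{i},\bm{j}\in\{0,1\}^n$ and entries $(\mathsf{T}_{\bm{x}})_{\bm{i}\bm{j}}=(-1)^{\sum_k (x_k\oplus i_k)\,j_k}$ ($\oplus$ is addition mod 2); it is a row-permuted Sylvester–Hadamard matrix, hence invertible. *)

(* Defs.v *)
From HB Require Import structures.
From mathcomp Require Import all_boot all_order all_algebra.
Set Implicit Arguments. Unset Strict Implicit. Unset Printing Implicit Defensive.
Import Order.TTheory GRing.Theory Num.Theory.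
Local Open Scope ring_scope.

(* Conventions: complex scalars are an arbitrary numClosedFieldType C
   (e.g. the complex numbers).  The computational basis of (C^2)^{⊗n} is
   indexed by 'I_(2^n); the bit string w ∈ {0,1}^n of an index i is given by
   w_k = bit i k = k-th binary digit of i. *)

Section Defs.
Variable C : numClosedFieldType.
Variable n : nat.

Definition bit (i : 'I_(2 ^ n)) (k : 'I_n) : bool := odd (i %/ 2 ^ k).

Definition bitI (i : 'I_(2 ^ n)) (k : 'I_n) : 'I_2 := (bit i k : nat)%:R.

Definition ctmx m p (A : 'M[C]_(m, p)) : 'M[C]_(p, m) := (map_mx Num.conj A)^T.

Definition hermitian (A : 'M[C]_(2 ^ n)) : Prop := ctmx A = A.

Definition psd (A : 'M[C]_(2 ^ n)) : Prop :=
  hermitian A /\ forall v : 'cV[C]_(2 ^ n), 0 <= (ctmx v *m A *m v) 0 0.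

Definition density (rho : 'M[C]_(2 ^ n)) : Prop := psd rho /\ \tr rho = 1.

Definition POVM (Pi : 'I_(2 ^ n) -> 'M[C]_(2 ^ n)) : Prop :=
  (forall x, psd (Pi x)) /\ \sum_x Pi x = 1%:M.

(* single-qubit Paulis: 0 = I, 1 = X, 2 = Y, 3 = Z *)
Definition imag : C := 'i.
Definition pauli1 (a : 'I_4) : 'M[C]_2 :=
  \matrix_(i < 2, j < 2)
    match val a with
    | 0 => if val i == val j then 1 else 0
    | 1 => if val i == val j then 0 else 1
    | 2 => if val i == val j then 0 else (if val i == 0 then - imag else imag)
    | _ => if val i == val j then (if val i == 0 then 1 else -1) else 0
    end.

(* n-qubit Pauli string P = P_0 ⊗ ... ⊗ P_{n-1} *)
Definition pauli (s : {ffun 'I_n -> 'I_4}) : 'M[C]_(2 ^ n) :=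
  \matrix_(i, j) \prod_(k < n) pauli1 (s k) (bitI i k) (bitI j k).

Definition ketbra (x : 'I_(2 ^ n)) : 'M[C]_(2 ^ n) := delta_mx x x.

Definition meas (Pi : 'I_(2 ^ n) -> 'M[C]_(2 ^ n)) (rho : 'M[C]_(2 ^ n)) :
  'M[C]_(2 ^ n) := \sum_x \tr (Pi x *m rho) *: ketbra x.

Definition meas_pauli (Pi : 'I_(2 ^ n) -> 'M[C]_(2 ^ n)) (rho : 'M[C]_(2 ^ n)) :
  'M[C]_(2 ^ n) :=
  (4 ^ n)%:R^-1 *: \sum_(s : {ffun 'I_n -> 'I_4})
     (pauli s *m meas Pi (pauli s *m rho *m pauli s) *m pauli s).

Definition diagv (A : 'M[C]_(2 ^ n)) : 'cV[C]_(2 ^ n) := \col_w A w w.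

Definition Tmx (x : 'I_(2 ^ n)) : 'M[C]_(2 ^ n) :=
  \matrix_(i, j) (-1) ^+ (\sum_(k < n) ((bit x k (+) bit i k) && bit j k : nat))%N.

End Defs.

(* Main.v *)
Require Import Defs.
From HB Require Import structures.
From mathcomp Require Import all_boot all_order all_algebra.
From mathcomp Require Import zify.
Import Order.TTheory GRing.Theory Num.Theory.
Local Open Scope ring_scope.

Definition nbit (i k : nat) : bool := odd (i %/ 2 ^ k).

Fixpoint fb (m : nat) (f : nat -> bool) : nat :=
  match m with 0 => 0 | m'.+1 => (f 0 + 2 * fb m' (fun k => f k.+1))%N end.

Lemma fb_lt m f : (fb m f < 2 ^ m)%N.
Proof.
elim: m f => [|m IH] f //=.
rewrite expnS; have := IH (fun k => f k.+1).
have : ((f 0 : nat) <= 1)%N by case: (f 0).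
lia.
Qed.

Lemma nbit_half i k : nbit i k.+1 = nbit (i %/ 2) k.
Proof. by rewrite /nbit expnS divnMA. Qed.

Lemma fb_bit m f k : (k < m)%N -> nbit (fb m f) k = f k.
Proof.
elim: m f k => [|m IH] f [|k] //= hk.
- by rewrite /nbit expn0 divn1 oddD oddM /=; case: (f 0).
- rewrite nbit_half.
  have -> : ((f 0 + 2 * fb m (fun k0 => f k0.+1)) %/ 2 = fb m (fun k0 => f k0.+1))%N.
    by rewrite mulnC divnDMl // divn_small ?addn0 //; case: (f 0).
  by rewrite IH.
Qed.

Lemma bits_inj m i j : (i < 2 ^ m)%N -> (j < 2 ^ m)%N ->
  (forall k, (k < m)%N -> nbit i k = nbit j k) -> i = j.
Proof.
elim: m i j => [|m IH] i j.
  by rewrite expn0 !ltnS !leqn0 => /eqP -> /eqP ->.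
move=> hi hj h.
rewrite (divn_eq i 2) (divn_eq j 2).
have h0 := h 0%N isT; rewrite /nbit expn0 !divn1 in h0.
rewrite !modn2 h0; congr (_ * _ + _)%N.
apply: IH.
- by rewrite ltn_divLR // -expnSr.
- by rewrite ltn_divLR // -expnSr.
move=> k hk; rewrite -!nbit_half; exact: h.
Qed.

Set Implicit Arguments. Unset Strict Implicit.

Definition xb (a : 'I_4) : bool := (val a == 1%N) || (val a == 2%N).

Lemma p1_off (C : numClosedFieldType) (a : 'I_4) (b c : bool) :
  c != b (+) xb a -> pauli1 C a ((b : nat)%:R) ((c : nat)%:R) = 0.
Proof.
case: a => [[|[|[|[|a]]]] Ha] //; case: b; case: c => //= _; rewrite mxE //=.
Qed.

Lemma p1_on (C : numClosedFieldType) (a : 'I_4) (b : bool) :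
  pauli1 C a ((b : nat)%:R) (((b (+) xb a) : nat)%:R) *
  pauli1 C a (((b (+) xb a) : nat)%:R) ((b : nat)%:R) = 1.
Proof.
case: a => [[|[|[|[|a]]]] Ha] //; case: b; rewrite !mxE /= ?mulr1 ?mulrN ?mulNr ?mulN1r ?opprK //.
all: rewrite ?mulr1 // /imag -expr2 sqrCi opprK.
all: done.

Qed.

Section S.
Variable C : numClosedFieldType.
Variable n : nat.

Definition mkI (f : nat -> bool) : 'I_(2 ^ n) := Ordinal (fb_lt n f).
Lemma bit_mkI f k : bit (mkI f) k = f k.
Proof. exact: fb_bit. Qed.

Lemma ord_bits_inj (i j : 'I_(2 ^ n)) : (forall k : 'I_n, bit i k = bit j k) -> i = j.
Proof.
move=> h; apply: val_inj; apply: (@bits_inj n) => [||k hk]; rewrite ?ltn_ord //.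
exact: (h (Ordinal hk)).
Qed.

Definition xo (i j : 'I_(2 ^ n)) : 'I_(2 ^ n) := mkI (fun k => nbit i k (+) nbit j k).
Lemma bit_xo i j k : bit (xo i j) k = bit i k (+) bit j k.
Proof. by rewrite bit_mkI. Qed.

Definition aidx (s : {ffun 'I_n -> 'I_4}) : 'I_(2 ^ n) :=
  mkI (fun k => if insub k is Some k' then xb (s k') else false).
Lemma bit_aidx s k : bit (aidx s) k = xb (s k).
Proof. by rewrite bit_mkI (insubT (fun k => k < n)%N (ltn_ord k)) /=; congr (xb (s _)); apply: val_inj. Qed.

Lemma pauli_off s (i j : 'I_(2 ^ n)) : j != xo i (aidx s) -> pauli C s i j = 0.
Proof.
move=> hj; rewrite mxE.
case: (boolP [exists k, bit j k != bit i k (+) xb (s k)]) => [/existsP [k hk]|].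
  by rewrite (bigD1 k) //= p1_off ?mul0r.
rewrite negb_exists => /forallP h; case/negP: hj; apply/eqP.
apply: ord_bits_inj => k; rewrite bit_xo bit_aidx; have := h k; by rewrite negbK => /eqP.
Qed.

Lemma pauli_on s (i : 'I_(2 ^ n)) :
  pauli C s i (xo i (aidx s)) * pauli C s (xo i (aidx s)) i = 1.
Proof.
rewrite !mxE -big_split /= big1 // => k _.
by rewrite /bitI bit_xo bit_aidx p1_on.
Qed.

End S.

Lemma mdm (R : comNzRingType) m N p (A : 'M[R]_(m, N)) (B : 'M[R]_(N, p)) z i j :
  (A *m delta_mx z z *m B) i j = A i z * B z j.
Proof.
rewrite mxE (bigD1 z) //= big1 ?addr0.
  rewrite mxE (bigD1 z) //= big1 ?addr0; first by rewrite mxE !eqxx mulr1.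
  by move=> k /negbTE hk; rewrite mxE hk mulr0.
move=> k /negbTE hk; rewrite mxE big1 ?mul0r // => l _.
by rewrite mxE hk andbF mulr0.
Qed.

Lemma tr_delta (R : comNzRingType) N (A : 'M[R]_N) w : \tr (A *m delta_mx w w) = A w w.
Proof.
rewrite /mxtrace (bigD1 w) //= big1 ?addr0.
  rewrite mxE (bigD1 w) //= big1 ?addr0; first by rewrite mxE !eqxx mulr1.
  by move=> k /negbTE hk; rewrite mxE hk mulr0.
move=> k /negbTE hk; rewrite mxE big1 // => l _.
by rewrite mxE hk andbF mulr0.
Qed.

Lemma density_delta (C : numClosedFieldType) n (w : 'I_(2 ^ n)) :
  density (delta_mx w w : 'M[C]_(2 ^ n)).
Proof.
split; last first.
  rewrite /mxtrace (bigD1 w) //= big1 ?addr0; first by rewrite mxE eqxx.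
  by move=> k /negbTE hk; rewrite mxE hk.
split.
  apply/matrixP => i j; rewrite !mxE.
  by case: (j == w); case: (i == w); rewrite /= ?conjC0 ?conjC1.
move=> v; rewrite mdm !mxE -normCKC; exact: exprn_ge0.
Qed.

Section T.
Variable C : numClosedFieldType.
Variable n : nat.
Implicit Types (i j w x y z : 'I_(2 ^ n)).

Lemma xoK i j : xo (xo i j) j = i.
Proof. by apply: ord_bits_inj => k; rewrite !bit_xo -addbA addbb addbF. Qed.

Lemma xo_eq x z a : (x == xo z a) = (z == xo x a).
Proof. by apply/eqP/eqP => ->; rewrite xoK. Qed.

Lemma pdp s z :
  pauli C s *m delta_mx z z *m pauli C s = delta_mx (xo z (aidx s)) (xo z (aidx s)).
Proof.
apply/matrixP => i j; rewrite mdm [in RHS]mxE.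
have [->|hj] := eqVneq j (xo z (aidx s)); last first.
  by rewrite andbF (@pauli_off _ _ _ z j) ?mulr0.
have [->|hi] := eqVneq i (xo z (aidx s)).
  by rewrite mulrC pauli_on.
by rewrite (@pauli_off _ _ _ i) ?mul0r // xo_eq.
Qed.

Lemma meas_xx (Pi : 'I_(2 ^ n) -> 'M[C]_(2 ^ n)) rho x : meas Pi rho x x = \tr (Pi x *m rho).
Proof.
rewrite /meas summxE (bigD1 x) //= big1 ?addr0; first by rewrite !mxE eqxx mulr1.
by move=> z /negbTE hz; rewrite !mxE eq_sym hz mulr0.
Qed.

Lemma pm_xx (Pi : 'I_(2 ^ n) -> 'M[C]_(2 ^ n)) s w x :
  (pauli C s *m meas Pi (pauli C s *m delta_mx w w *m pauli C s) *m pauli C s) x x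
  = Pi (xo x (aidx s)) (xo w (aidx s)) (xo w (aidx s)).
Proof.
rewrite pdp /meas mulmx_sumr mulmx_suml summxE.
under eq_bigr do rewrite tr_delta -scalemxAr -scalemxAl pdp.
rewrite (bigD1 (xo x (aidx s))) //= big1 ?addr0.
  by rewrite !mxE xoK eqxx mulr1.
by move=> z hz; rewrite !mxE xo_eq (negbTE hz) mulr0.
Qed.

Lemma key (Pi PiP : 'I_(2 ^ n) -> 'M[C]_(2 ^ n)) :
  (forall rho : 'M[C]_(2 ^ n), density rho -> meas_pauli Pi rho = meas PiP rho) ->
  forall x w, PiP x w w = (4 ^ n)%:R^-1 *
    \sum_(s : {ffun 'I_n -> 'I_4}) Pi (xo x (aidx s)) (xo w (aidx s)) (xo w (aidx s)).
Proof.
move=> H x w.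
have := congr1 (fun M : 'M[C]_(2 ^ n) => M x x) (H _ (density_delta C w)).
rewrite /= meas_xx tr_delta => <-.
rewrite /meas_pauli mxE summxE; congr (_ * _); apply: eq_bigr => s _.
exact: pm_xx.
Qed.


Definition swapX (a : 'I_4) : 'I_4 :=
  match val a with 0 => inord 1 | 1 => inord 0 | 2 => inord 3 | _ => inord 2 end.
Lemma swapXK : involutive swapX.
Proof.
case=> [[|[|[|[|a]]]] Ha] //; apply: val_inj; rewrite /swapX /= ?inordK //.
Qed.
Lemma xb_swapX a : xb (swapX a) = ~~ xb a.
Proof. case: a => [[|[|[|[|a]]]] Ha] //; rewrite /xb /swapX /= ?inordK //. Qed.

Definition tog (t : 'I_(2 ^ n)) (s : {ffun 'I_n -> 'I_4}) : {ffun 'I_n -> 'I_4} :=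
  [ffun k => if bit t k then swapX (s k) else s k].
Lemma togK t : involutive (tog t).
Proof. by move=> s; apply/ffunP => k; rewrite !ffunE; case: (bit t k); rewrite ?swapXK. Qed.
Lemma aidx_tog t s : aidx (tog t s) = xo (aidx s) t.
Proof.
apply: ord_bits_inj => k; rewrite bit_xo !bit_aidx ffunE.
by case: (bit t k); rewrite ?xb_swapX ?addbT ?addbF.
Qed.

Lemma shift (Pi PiP : 'I_(2 ^ n) -> 'M[C]_(2 ^ n)) :
  (forall rho : 'M[C]_(2 ^ n), density rho -> meas_pauli Pi rho = meas PiP rho) ->
  forall x y w, PiP y w w = PiP x (xo w (xo x y)) (xo w (xo x y)).
Proof.
move=> H x y w; rewrite !(key H); congr (_ * _).
rewrite (reindex_inj (can_inj (togK (xo x y)))) /=.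
apply: eq_bigr => s _; rewrite aidx_tog.
have e1 : xo y (xo (aidx s) (xo x y)) = xo x (aidx s).
  apply: ord_bits_inj => k; rewrite !bit_xo.
  by case: (bit y k) (bit x k) (bit (aidx s) k) => [] [] [].
have e2 : xo w (xo (aidx s) (xo x y)) = xo (xo w (xo x y)) (aidx s).
  apply: ord_bits_inj => k; rewrite !bit_xo.
  by case: (bit y k) (bit x k) (bit (aidx s) k) (bit w k) => [] [] [] [].
by rewrite e1 e2.
Qed.


Definition chi (c j : 'I_(2 ^ n)) : C := \prod_(k < n) (-1) ^+ (bit c k && bit j k : nat).

Definition ek (k0 : 'I_n) : 'I_(2 ^ n) := @mkI n (fun k => k == val k0).
Lemma bit_ek k0 k : bit (ek k0) k = (k == k0).
Proof. by rewrite bit_mkI. Qed.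

Lemma chi_flip c j k0 : bit c k0 -> chi c (xo j (ek k0)) = - chi c j.
Proof.
move=> hc; rewrite /chi (bigD1 k0) //= [in RHS](bigD1 k0) //= hc.
rewrite bit_xo bit_ek eqxx addbT -mulNr; congr (_ * _).
  by case: (bit j k0); rewrite /= ?expr0 ?expr1 ?opprK.
apply: eq_bigr => k hk; by rewrite bit_xo bit_ek (negbTE hk) addbF.
Qed.

Lemma chi_sum0 c k0 : bit c k0 -> \sum_j chi c j = 0.
Proof.
move=> hc; set S := \sum_j chi c j.
have hS : S = - S.
  have inj : injective (fun j => xo j (ek k0)).
    by apply: (@can_inj _ _ _ (fun j => xo j (ek k0))) => j; rewrite xoK.
  rewrite {1}/S (reindex_inj inj) /=.
  by rewrite /S -sumrN; apply: eq_bigr => j _; rewrite chi_flip.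
have : S *+ 2 == 0 by rewrite mulr2n {1}hS addNr.
by rewrite mulrn_eq0 /= => /eqP.
Qed.

Definition Tinv (x : 'I_(2 ^ n)) : 'M[C]_(2 ^ n) := (2 ^ n)%:R^-1 *: (Tmx C x)^T.

Lemma T_Tinv x : Tmx C x *m Tinv x = 1%:M.
Proof.
apply/matrixP => i l; rewrite !mxE.
have e : forall j, Tmx C x i j * Tinv x j l = (2 ^ n)%:R^-1 * chi (xo i l) j.
  move=> j; rewrite !mxE mulrCA; congr (_ * _).
  rewrite !expr_sum -big_split /=; apply: eq_bigr => k _; rewrite bit_xo.
  case: (bit x k); case: (bit i k); case: (bit l k); case: (bit j k);
     by rewrite /= ?expr0 ?expr1 ?mulr1 ?mul1r ?mulrNN ?mulr1.
under eq_bigr do rewrite e.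
rewrite -mulr_sumr.
have [<-|hil] := eqVneq i l.
  rewrite (eq_bigr (fun _ => 1)) => [|j _]; last first.
    by rewrite /chi big1 // => k _; rewrite bit_xo addbb expr0.
  rewrite sumr_const card_ord mulVf //.
  by rewrite pnatr_eq0 expn_eq0.
case: (boolP [exists k, bit i k != bit l k]) => [/existsP [k hk]|].
  rewrite (@chi_sum0 _ k) ?mulr0 // bit_xo.
  by move: hk; case: (bit i k); case: (bit l k).
rewrite negb_exists => /forallP h; case/negP: hil; apply/eqP.
by apply: ord_bits_inj => k; have := h k; rewrite negbK => /eqP.
Qed.


Definition Pm (t : 'I_(2 ^ n)) : 'M[C]_(2 ^ n) := \matrix_(i, j) ((j == xo i t)%:R).

Lemma Tmx_shift x y : Tmx C y = Pm (xo x y) *m Tmx C x.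
Proof.
apply/matrixP => i j; rewrite [RHS]mxE (bigD1 (xo i (xo x y))) //= big1 ?addr0.
  rewrite !mxE eqxx mul1r; congr ((-1) ^+ _); apply: eq_bigr => k _.
  rewrite !bit_xo.
  by case: (bit x k); case: (bit y k); case: (bit i k).
by move=> l hl; rewrite mxE (negbTE hl) mul0r.
Qed.

Lemma Pm_mul t (d : 'cV[C]_(2 ^ n)) w : (Pm t *m d) w 0 = d (xo w t) 0.
Proof.
rewrite mxE (bigD1 (xo w t)) //= big1 ?addr0; first by rewrite mxE eqxx mul1r.
by move=> l hl; rewrite mxE (negbTE hl) mul0r.
Qed.

End T.

Theorem proposition5 (C : numClosedFieldType) (n : nat)
  (Pi PiP : 'I_(2 ^ n) -> 'M[C]_(2 ^ n)) :
  POVM Pi -> POVM PiP ->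
  (forall rho : 'M[C]_(2 ^ n), density rho -> meas_pauli Pi rho = meas PiP rho) ->
  forall x y : 'I_(2 ^ n),
    diagv (PiP y) = Tmx C y *m invmx (Tmx C x) *m diagv (PiP x).
Proof.
move=> _ _ H x y.
have [hu _] := mulmx1_unit (T_Tinv C x).
rewrite (Tmx_shift C x y) -(mulmxA (Pm C _)) mulmxV // mulmx1.
apply/matrixP => w j; rewrite (ord1 j) Pm_mul !mxE.
exact: shift H x y w.
Qed.
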